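(* Let $G$ be a nilpotent group in which every non-abelian subgroup $H$ satisfies $C_G(H)\le H$. Then $G$ is abelian or finite.
   Context: $C_G(H)$ denotes the centralizer of $H$ in $G$. The class of groups in which every non-abelian subgroup contains its own centralizer is denoted $\mathfrak A$ in the paper. *)

(* Defs.v *)
From Stdlib Require Import List.
Set Implicit Arguments.

Record is_group (T : Type) (mul : T -> T -> T) (one : T) (inv : T -> T) : Prop := {
  grp_assoc : forall x y z, mul x (mul y z) = mul (mul x y) z;
  grp_mul1l : forall x, mul one x = x;
  grp_mul1r : forall x, mul x one = x;
  grp_mulVl : forall x, mul (inv x) x = one;
  grp_mulVr : forall x, mul x (inv x) = one
}.

Definition is_subgroup (T : Type) (mul : T -> T -> T) (one : T) (inv : T -> T)
  (H : T -> Prop) : Prop :=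
  H one /\ (forall x y, H x -> H y -> H (mul x y)) /\ (forall x, H x -> H (inv x)).

Definition abelian_set (T : Type) (mul : T -> T -> T) (H : T -> Prop) : Prop :=
  forall x y, H x -> H y -> mul x y = mul y x.

Definition abelian_group (T : Type) (mul : T -> T -> T) : Prop :=
  forall x y : T, mul x y = mul y x.

Definition centralizer (T : Type) (mul : T -> T -> T) (H : T -> Prop) : T -> Prop :=
  fun g => forall h, H h -> mul g h = mul h g.

Definition comm (T : Type) (mul : T -> T -> T) (inv : T -> T) (x y : T) : T :=
  mul (mul (inv x) (inv y)) (mul x y).

(* upper central series: Z_0 = 1, Z_{i+1} = { x | [x, y] \in Z_i for all y },
   i.e. Z_{i+1}/Z_i = Z(G/Z_i). *)
Fixpoint upper_central (T : Type) (mul : T -> T -> T) (one : T) (inv : T -> T)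
  (n : nat) : T -> Prop :=
  match n with
  | O => fun x => x = one
  | S m => fun x => forall y, upper_central mul one inv m (comm mul inv x y)
  end.

Definition nilpotent_group (T : Type) (mul : T -> T -> T) (one : T) (inv : T -> T) : Prop :=
  exists n, forall x, upper_central mul one inv n x.

Definition finite_group (T : Type) : Prop :=
  exists l : list T, forall x, In x l.

(* Main.v *)
Require Import Defs.
From Stdlib Require Import ZArith Lia List Classical.
Open Scope Z_scope.

Section Grp.
Variables (T : Type) (mul : T -> T -> T) (one : T) (inv : T -> T).
Hypothesis HG : is_group mul one inv.
Local Infix "⋅" := mul (at level 40, left associativity).

Lemma mulA x y z : x ⋅ (y ⋅ z) = x ⋅ y ⋅ z. Proof. apply (grp_assoc HG). Qed.
Lemma mul1l x : one ⋅ x = x. Proof. apply (grp_mul1l HG). Qed.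
Lemma mul1r x : x ⋅ one = x. Proof. apply (grp_mul1r HG). Qed.
Lemma mulVl x : inv x ⋅ x = one. Proof. apply (grp_mulVl HG). Qed.
Lemma mulVr x : x ⋅ inv x = one. Proof. apply (grp_mulVr HG). Qed.
Lemma mulKV a x : a ⋅ x ⋅ inv x = a.
Proof. rewrite <- mulA, mulVr, mul1r. reflexivity. Qed.
Lemma mulVK a x : a ⋅ inv x ⋅ x = a.
Proof. rewrite <- mulA, mulVl, mul1r. reflexivity. Qed.
Lemma mulKl x y : inv x ⋅ (x ⋅ y) = y.
Proof. rewrite mulA, mulVl, mul1l. reflexivity. Qed.
Lemma mulKr x y : x ⋅ (inv x ⋅ y) = y.
Proof. rewrite mulA, mulVr, mul1l. reflexivity. Qed.
Lemma cancel_l x y z : x ⋅ y = x ⋅ z -> y = z.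
Proof. intro H. rewrite <- (mulKl x y), H, mulKl. reflexivity. Qed.
Lemma cancel_r x y z : y ⋅ x = z ⋅ x -> y = z.
Proof. intro H. rewrite <- (mulKV y x), H, mulKV. reflexivity. Qed.
Lemma inv_uniq x y : x ⋅ y = one -> y = inv x.
Proof. intro H. apply (cancel_l x). rewrite H, mulVr. reflexivity. Qed.
Lemma inv_inv x : inv (inv x) = x.
Proof. symmetry. apply inv_uniq. apply mulVl. Qed.
Lemma inv_mul x y : inv (x ⋅ y) = inv y ⋅ inv x.
Proof. symmetry. apply inv_uniq. rewrite !mulA, mulKV, mulVr. reflexivity. Qed.
Lemma inv_one : inv one = one.
Proof. symmetry. apply inv_uniq. apply mul1l. Qed.

Fixpoint npow (x : T) (n : nat) : T :=
  match n with O => one | S m => npow x m ⋅ x end.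
Definition zpow (x : T) (z : Z) : T :=
  if z >=? 0 then npow x (Z.to_nat z) else npow (inv x) (Z.to_nat (- z)).

Lemma zpow0 x : zpow x 0 = one. Proof. reflexivity. Qed.
Lemma zpow_succ x z : zpow x (z + 1) = zpow x z ⋅ x.
Proof.
  unfold zpow. destruct (Z.geb_spec z 0).
  - destruct (Z.geb_spec (z+1) 0); [|lia].
    replace (Z.to_nat (z+1)) with (S (Z.to_nat z)) by lia. reflexivity.
  - destruct (Z.eq_dec z (-1)) as [->|Hn].
    + simpl. rewrite mul1l, mulVl. reflexivity.
    + destruct (Z.geb_spec (z+1) 0); [lia|].
      replace (Z.to_nat (-z)) with (S (Z.to_nat (-(z+1)))) by lia.
      simpl. rewrite mulVK. reflexivity.
Qed.
Lemma zpow1 x : zpow x 1 = x.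
Proof. change 1 with (0+1). rewrite zpow_succ, zpow0, mul1l. reflexivity. Qed.
Lemma zpow_pred x z : zpow x (z - 1) = zpow x z ⋅ inv x.
Proof.
  replace (zpow x z) with (zpow x (z - 1 + 1)) by (f_equal; lia).
  rewrite zpow_succ, mulKV. reflexivity.
Qed.
Lemma zpow_add x a b : zpow x (a + b) = zpow x a ⋅ zpow x b.
Proof.
  induction b using Z.peano_ind.
  - rewrite Z.add_0_r, zpow0, mul1r. reflexivity.
  - rewrite <- !Z.add_1_r, Z.add_assoc, !zpow_succ, IHb, mulA. reflexivity.
  - rewrite <- !Z.sub_1_r, Z.add_sub_assoc, !zpow_pred, IHb, mulA. reflexivity.
Qed.
Lemma zpow_opp x a : zpow x (- a) = inv (zpow x a).
Proof. apply inv_uniq. rewrite <- zpow_add. replace (a + - a) with 0 by lia. reflexivity. Qed.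
Lemma zpow_mul x a b : zpow x (a * b) = zpow (zpow x a) b.
Proof.
  induction b using Z.peano_ind.
  - rewrite Z.mul_0_r. reflexivity.
  - rewrite <- Z.add_1_r, Z.mul_add_distr_l, Z.mul_1_r, zpow_add, zpow_succ, IHb. reflexivity.
  - rewrite <- Z.sub_1_r, zpow_pred, <- IHb.
    replace (a * (b - 1)) with (a * b + - a) by lia.
    rewrite zpow_add, zpow_opp. reflexivity.
Qed.
Lemma zpow_one a : zpow one a = one.
Proof.
  induction a using Z.peano_ind.
  - reflexivity.
  - rewrite <- Z.add_1_r, zpow_succ, IHa, mul1l. reflexivity.
  - rewrite <- Z.sub_1_r, zpow_pred, IHa, inv_one, mul1l. reflexivity.
Qed.

Definition central (c : T) := forall g, c ⋅ g = g ⋅ c.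
Lemma central_inv c : central c -> central (inv c).
Proof.
  intros Hc g. apply (cancel_l c). rewrite mulA, mulVr, mul1l, mulA, Hc, mulKV. reflexivity.
Qed.
Lemma central_zpow c a : central c -> central (zpow c a).
Proof.
  intros Hc. induction a using Z.peano_ind; intro g.
  - rewrite zpow0, mul1l, mul1r. reflexivity.
  - rewrite <- Z.add_1_r, zpow_succ. rewrite <- mulA, Hc, mulA, IHa, <- mulA. reflexivity.
  - rewrite <- Z.sub_1_r, zpow_pred. rewrite <- mulA, (central_inv c Hc), mulA, IHa, <- mulA. reflexivity.
Qed.
Lemma zpow_mul_central x c a : central c -> zpow (x ⋅ c) a = zpow x a ⋅ zpow c a.
Proof.
  intros Hc. induction a using Z.peano_ind.
  - rewrite !zpow0, mul1l. reflexivity.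
  - rewrite <- Z.add_1_r, !zpow_succ, IHa, !mulA.
    rewrite <- (mulA (zpow x a) (zpow c a) x), (central_zpow c a Hc x), mulA. reflexivity.
  - rewrite <- Z.sub_1_r, !zpow_pred, IHa, inv_mul, (central_inv c Hc (inv x)), !mulA.
    rewrite <- (mulA (zpow x a) (zpow c a) (inv x)), (central_zpow c a Hc (inv x)), mulA. reflexivity.
Qed.


Lemma cmove a z b : central z -> a ⋅ z ⋅ b = a ⋅ b ⋅ z.
Proof. intro Hz. rewrite <- mulA, Hz, mulA. reflexivity. Qed.

Definition conj g u := inv g ⋅ u ⋅ g.
Lemma conj_mul g h u : conj (g ⋅ h) u = conj h (conj g u).
Proof. unfold conj. rewrite inv_mul, !mulA. reflexivity. Qed.
Lemma conj_mulu g u v : conj g (u ⋅ v) = conj g u ⋅ conj g v.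
Proof. unfold conj. rewrite !mulA, mulKV. reflexivity. Qed.
Lemma conj_central g z : central z -> conj g z = z.
Proof. intro Hz. unfold conj. rewrite <- Hz, mulVK. reflexivity. Qed.
Lemma conj_inv g u : conj g (inv u) = inv (conj g u).
Proof. unfold conj. rewrite !inv_mul, inv_inv, !mulA. reflexivity. Qed.
Lemma conj_zpow g u a : zpow (conj g u) a = conj g (zpow u a).
Proof.
  induction a using Z.peano_ind.
  - unfold conj. rewrite !zpow0, mul1r, mulVl. reflexivity.
  - rewrite <- Z.add_1_r, !zpow_succ, IHa, conj_mulu. reflexivity.
  - rewrite <- Z.sub_1_r, !zpow_pred, IHa, conj_mulu, conj_inv. reflexivity.
Qed.
Lemma conj_one u : conj one u = u.
Proof. unfold conj. rewrite inv_one, mul1l, mul1r. reflexivity. Qed.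
Lemma conj_zpow_gen g u d b : central d -> conj g u = u ⋅ d -> conj (zpow g b) u = u ⋅ zpow d b.
Proof.
  intros Hd Hg. induction b using Z.peano_ind.
  - rewrite !zpow0, conj_one, mul1r. reflexivity.
  - rewrite <- Z.add_1_r, !zpow_succ, conj_mul, IHb, conj_mulu, Hg,
      (conj_central g (zpow d b) (central_zpow d b Hd)), <- mulA, <- (Hd (zpow d b)). reflexivity.
  - assert (Hi : conj (inv g) u = u ⋅ inv d).
    { unfold conj in *. rewrite inv_inv. apply (cancel_r d). rewrite mulVK.
      rewrite <- (cmove (g ⋅ u) d (inv g) Hd), <- (mulA g u d), <- Hg, !mulA, mulVr, mul1l, mulKV.
      reflexivity. }
    rewrite <- Z.sub_1_r, !zpow_pred, conj_mul, IHb, conj_mulu, Hi,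
      (conj_central (inv g) (zpow d b) (central_zpow d b Hd)), <- mulA, <- (central_inv d Hd (zpow d b)). reflexivity.
Qed.

Section Two.
Variables x y : T.
Hypothesis Hc : central (comm mul inv x y).
Local Notation c := (comm mul inv x y).

Lemma conj_yx : conj y x = x ⋅ c.
Proof. unfold conj, comm. rewrite !mulA, mulVr, mul1l. reflexivity. Qed.

Lemma swap_xy a b : zpow x a ⋅ zpow y b = zpow y b ⋅ zpow x a ⋅ zpow c (b * a).
Proof.
  assert (H : conj (zpow y b) (zpow x a) = zpow x a ⋅ zpow c (b * a)).
  { rewrite <- conj_zpow, (conj_zpow_gen y x c b Hc conj_yx), zpow_mul_central
      by (apply central_zpow; exact Hc).
    rewrite zpow_mul. reflexivity. }
  unfold conj in H. rewrite <- mulA, <- H, !mulA, mulVr, mul1l. reflexivity.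
Qed.

Definition P a b k := zpow x a ⋅ zpow y b ⋅ zpow c k.

Lemma P_mul a b k a' b' k' :
  P a b k ⋅ P a' b' k' = P (a + a') (b + b') (k + k' - b * a').
Proof.
  unfold P. rewrite !mulA.
  rewrite (cmove (zpow x a ⋅ zpow y b) (zpow c k) (zpow x a') (central_zpow c k Hc)).
  rewrite (cmove (zpow x a ⋅ zpow y b ⋅ zpow x a') (zpow c k) (zpow y b') (central_zpow c k Hc)).
  rewrite <- (mulA (zpow x a) (zpow y b) (zpow x a')).
  replace (zpow y b ⋅ zpow x a') with (zpow x a' ⋅ zpow y b ⋅ zpow c (- (b * a'))).
  2:{ rewrite swap_xy, <- mulA, <- zpow_add. replace (b * a' + - (b * a')) with 0 by lia.
      rewrite zpow0, mul1r. reflexivity. }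
  rewrite !mulA, <- (zpow_add x a a').
  rewrite (cmove (zpow x (a + a') ⋅ zpow y b) (zpow c (- (b * a'))) (zpow y b') (central_zpow c _ Hc)).
  rewrite <- (mulA _ (zpow y b) (zpow y b')), <- zpow_add.
  rewrite <- !mulA, <- !zpow_add. do 3 f_equal. lia.
Qed.

Lemma P000 : P 0 0 0 = one.
Proof. unfold P. rewrite !zpow0, !mul1l. reflexivity. Qed.

Lemma P_inv a b k : inv (P a b k) = P (- a) (- b) (- k - a * b).
Proof. symmetry. apply inv_uniq. rewrite P_mul, <- P000. f_equal; lia. Qed.

Lemma P_cancel a b k k' : P a b k = P a b k' -> zpow c k = zpow c k'.
Proof. unfold P. apply cancel_l. Qed.

Lemma P_x a : P a 0 0 = zpow x a.
Proof. unfold P. rewrite !zpow0, !mul1r. reflexivity. Qed.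
Lemma P_y b : P 0 b 0 = zpow y b.
Proof. unfold P. rewrite !zpow0, mul1l, mul1r. reflexivity. Qed.
Lemma P_c k : P 0 0 k = zpow c k.
Proof. unfold P. rewrite !zpow0, !mul1l. reflexivity. Qed.


Lemma P_eq a b k a' b' k' : a = a' -> b = b' -> k = k' -> P a b k = P a' b' k'.
Proof. intros -> -> ->. reflexivity. Qed.
Lemma P_eqc a b k k' : zpow c k = zpow c k' -> P a b k = P a b k'.
Proof. unfold P. intros ->. reflexivity. Qed.

Lemma zdiff g m n : zpow g m = zpow g n -> zpow g (m - n) = one.
Proof.
  intro H. replace (m - n) with (m + - n) by lia. rewrite zpow_add, zpow_opp, H, mulVr. reflexivity.
Qed.

Definition S N M L := fun g => exists a b k, g = P (N * a) (M * b) (L * k).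

Lemma S_sub N M L t : N * M = L * t -> is_subgroup mul one inv (S N M L).
Proof.
  intro Ht. split; [|split].
  - exists 0, 0, 0. rewrite !Z.mul_0_r. symmetry. apply P000.
  - intros g h [a [b [k ->]]] [a' [b' [k' ->]]]. exists (a + a'), (b + b'), (k + k' - t * b * a').
    rewrite P_mul. apply P_eq; [lia|lia|].
    replace (L * (k + k' - t * b * a')) with (L * k + L * k' - (L * t) * b * a') by ring.
    rewrite <- Ht. ring.
  - intros g [a [b [k ->]]]. exists (- a), (- b), (- k - t * a * b).
    rewrite P_inv. apply P_eq; [lia|lia|].
    replace (L * (- k - t * a * b)) with (- (L * k) - (L * t) * a * b) by ring.
    rewrite <- Ht. ring.
Qed.

Lemma S_nonab N M L : zpow c (N * M) <> one -> ~ abelian_set mul (S N M L).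
Proof.
  intros Hne Hab. apply Hne.
  assert (E := Hab (P N 0 0) (P 0 M 0)).
  assert (E1 : S N M L (P N 0 0)) by (exists 1, 0, 0; apply P_eq; lia).
  assert (E3 : S N M L (P 0 M 0)) by (exists 0, 1, 0; apply P_eq; lia).
  specialize (E E1 E3).
  rewrite !P_mul in E.
  assert (E2 : P (N + 0) (0 + M) (0 + 0 - 0 * 0) = P (N + 0) (0 + M) (0 + 0 - M * N)).
  { rewrite E. apply P_eq; lia. }
  apply P_cancel in E2. apply zdiff in E2. rewrite <- E2. f_equal. lia.
Qed.

Hypothesis HA : forall H : T -> Prop, is_subgroup mul one inv H -> ~ abelian_set mul H ->
        forall g, centralizer mul H g -> H g.
Hypothesis Hc1 : c <> one.

Lemma c_torsion : exists n, n <> 0 /\ zpow c n = one.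
Proof.
  apply NNPP. intro Hn.
  assert (Hne : forall n, n <> 0 -> zpow c n <> one).
  { intros n H0 H1. apply Hn. exists n. auto. }
  assert (Hin : S 2 2 4 c).
  { apply HA. apply (S_sub 2 2 4 1). lia. apply S_nonab. apply Hne. lia.
    intros h _. apply Hc. }
  destruct Hin as [a [b [k Hk]]].
  assert (Hw : central (P (2 * a) (2 * b) (4 * k))) by (rewrite <- Hk; exact Hc).
  assert (Eb := Hw (P 1 0 0)). rewrite !P_mul in Eb.
  assert (Eb' : P (2 * a + 1) (2 * b + 0) (4 * k + 0 - 2 * b * 1) = P (2 * a + 1) (2 * b + 0) (4 * k + 0 - 2 * b * 1 + 2 * b)).
  { rewrite Eb. apply P_eq; lia. }
  apply P_cancel, zdiff in Eb'.
  assert (Ea := Hw (P 0 1 0)). rewrite !P_mul in Ea.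
  assert (Ea' : P (2 * a + 0) (2 * b + 1) (4 * k + 0 - 2 * b * 0) = P (2 * a + 0) (2 * b + 1) (4 * k + 0 - 2 * b * 0 - 2 * a)).
  { rewrite Ea. apply P_eq; lia. }
  apply P_cancel, zdiff in Ea'.
  assert (b = 0).
  { destruct (Z.eq_dec b 0) as [|Hb]; auto. exfalso. apply (Hne (4 * k + 0 - 2 * b * 1 - (4 * k + 0 - 2 * b * 1 + 2 * b))). lia. exact Eb'. }
  assert (a = 0).
  { destruct (Z.eq_dec a 0) as [|Hb]; auto. exfalso. apply (Hne (4 * k + 0 - 2 * b * 0 - (4 * k + 0 - 2 * b * 0 - 2 * a))). lia. exact Ea'. }
  subst. rewrite !Z.mul_0_r, P_c in Hk.
  assert (Hk2 : zpow c 1 = zpow c (4 * k)) by (rewrite zpow1; exact Hk).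
  apply zdiff in Hk2. rename Hk2 into Hk0. apply (Hne (1 - 4 * k)). lia. exact Hk0.
Qed.


Lemma zpow_mult_one g o t : zpow g o = one -> zpow g (o * t) = one.
Proof. intro H. rewrite zpow_mul, H, zpow_one. reflexivity. Qed.
Lemma zpow_mod g o k t : zpow g o = one -> zpow g (k + o * t) = zpow g k.
Proof. intro H. rewrite zpow_add, (zpow_mult_one g o t H), mul1r. reflexivity. Qed.
Lemma zpow_abs_one g n : zpow g n = one -> zpow g (Z.abs n) = one.
Proof.
  intro H. destruct (Z.abs_spec n) as [[_ ->]|[_ ->]]; auto. rewrite zpow_opp, H, inv_one. reflexivity.
Qed.

Lemma c_order : exists o, 2 <= o /\ zpow c o = one.
Proof.
  destruct c_torsion as [n [Hn0 Hn]]. exists (Z.abs n). split.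
  - assert (Z.abs n <> 1).
    { intro H1. apply Hc1. rewrite <- (zpow1 c), <- H1. apply zpow_abs_one. exact Hn. }
    lia.
  - apply zpow_abs_one. exact Hn.
Qed.

Lemma Pyc_pow B K t : zpow (P 0 B K) t = P 0 (B * t) (K * t).
Proof.
  unfold P. rewrite !zpow0, !mul1l, zpow_mul_central by (apply central_zpow; exact Hc).
  rewrite <- !zpow_mul. reflexivity.
Qed.
Lemma Pxc_pow A K t : zpow (P A 0 K) t = P (A * t) 0 (K * t).
Proof.
  unfold P. rewrite !zpow0, !mul1r, zpow_mul_central by (apply central_zpow; exact Hc).
  rewrite <- !zpow_mul. reflexivity.
Qed.

Lemma P_mod o a b k t : zpow c o = one -> P a b (k + o * t) = P a b k.
Proof. intro Ho. apply P_eqc. apply zpow_mod. exact Ho. Qed.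

Lemma xy_torsion : exists m, 0 < m /\ zpow x m = one /\ zpow y m = one.
Proof.
  destruct c_order as [o [Ho2 Ho]].
  set (N := 1 + o).
  assert (HS : is_subgroup mul one inv (S N N 1)) by (apply (S_sub N N 1 (N * N)); ring).
  assert (HNab : ~ abelian_set mul (S N N 1)).
  { apply S_nonab. replace (N * N) with (1 + o * (2 + o)) by (unfold N; ring).
    rewrite zpow_mod, zpow1 by exact Ho. exact Hc1. }
  assert (E1 : S N N 1 (P o 0 0)).
  { apply HA; auto. intros h [a [b [k ->]]]. rewrite !P_mul.
    transitivity (P (N * a + o) (N * b + 0) (1 * k + 0 - N * b * o + o * (N * b))).
    - apply P_eq; lia.
    - apply P_mod. exact Ho. }
  assert (E2 : S N N 1 (P 0 o 0)).
  { apply HA; auto. intros h [a [b [k ->]]]. rewrite !P_mul.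
    transitivity (P (N * a + 0) (N * b + o) (1 * k + 0 - N * b * 0 + o * (- (N * a)))).
    - apply P_eq; lia.
    - apply P_mod. exact Ho. }
  destruct E1 as [a1 [b1 [k1 E1]]]. destruct E2 as [a2 [b2 [k2 E2]]].
  set (p := o - N * a1). set (q := o - N * b2).
  assert (D1 : zpow x p = P 0 (N * b1) k1).
  { rewrite <- P_x. transitivity (P (- (N * a1)) 0 0 ⋅ P o 0 0).
    - rewrite P_mul. apply P_eq; unfold p; lia.
    - rewrite E1, P_mul. apply P_eq; lia. }
  assert (D2 : zpow y q = P (N * a2) 0 k2).
  { rewrite <- P_y. transitivity (P 0 o 0 ⋅ P 0 (- (N * b2)) 0).
    - rewrite P_mul. apply P_eq; unfold q; lia.
    - rewrite E2, P_mul. apply P_eq; lia. }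
  set (d := p * q - N * a2 * (N * b1)).
  assert (Hd : d <> 0).
  { assert (Hd1 : d = 1 + N * (N * (1 - a1) * (1 - b2) - (1 - a1) - (1 - b2) - N * a2 * b1)).
    { unfold d, p, q, N. ring. }
    assert (N >= 3) by (unfold N; lia).
    set (mm := N * (1 - a1) * (1 - b2) - (1 - a1) - (1 - b2) - N * a2 * b1) in *.
    destruct (Z.le_gt_cases 0 mm); nia. }
  assert (Xd : exists K, zpow x d = zpow c K).
  { assert (H1 : zpow x (p * q) = P (N * a2 * (N * b1)) 0 (k2 * (N * b1) + k1 * q)).
    { rewrite zpow_mul, D1, Pyc_pow.
      transitivity (P 0 (q * (N * b1)) 0 ⋅ P 0 0 (k1 * q)).
      - rewrite P_mul. apply P_eq; lia.
      - rewrite P_y, zpow_mul, D2, Pxc_pow, P_mul. apply P_eq; lia. }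
    exists (k2 * (N * b1) + k1 * q). rewrite <- P_x, <- P_c.
    transitivity (P (- (N * a2 * (N * b1))) 0 0 ⋅ P (p * q) 0 0).
    - rewrite P_mul. apply P_eq; unfold d; lia.
    - rewrite (P_x (p * q)), H1, P_mul. apply P_eq; lia. }
  assert (Yd : exists K, zpow y d = zpow c K).
  { assert (H1 : zpow y (q * p) = P 0 (N * b1 * (N * a2)) (k1 * (N * a2) + k2 * p)).
    { rewrite zpow_mul, D2, Pxc_pow.
      transitivity (P (p * (N * a2)) 0 0 ⋅ P 0 0 (k2 * p)).
      - rewrite P_mul. apply P_eq; lia.
      - rewrite P_x, zpow_mul, D1, Pyc_pow, P_mul. apply P_eq; lia. }
    exists (k1 * (N * a2) + k2 * p). rewrite <- P_y, <- P_c.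
    transitivity (P 0 (- (N * b1 * (N * a2))) 0 ⋅ P 0 (q * p) 0).
    - rewrite P_mul. apply P_eq; unfold d; lia.
    - rewrite (P_y (q * p)), H1, P_mul. apply P_eq; lia. }
  destruct Xd as [K1 Xd]. destruct Yd as [K2 Yd].
  exists (Z.abs (d * o)). split; [lia|split]; apply zpow_abs_one.
  - rewrite zpow_mul, Xd, <- zpow_mul, Z.mul_comm, zpow_mul, Ho, zpow_one. reflexivity.
  - rewrite zpow_mul, Yd, <- zpow_mul, Z.mul_comm, zpow_mul, Ho, zpow_one. reflexivity.
Qed.


Lemma zpow_modm g m a : 0 < m -> zpow g m = one -> zpow g a = zpow g (a mod m).
Proof.
  intros Hm Hg. rewrite (Z.div_mod a m) at 1 by lia.
  rewrite Z.add_comm. apply zpow_mod. exact Hg.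
Qed.

Definition fin (Q : T -> Prop) := exists l, forall g, Q g -> In g l.

Lemma H_fin : fin (S 1 1 1).
Proof.
  destruct xy_torsion as [m [Hm [Hx Hy]]]. destruct c_order as [o [Ho2 Ho]].
  exists (flat_map (fun a => flat_map (fun b => map (fun k => P (Z.of_nat a) (Z.of_nat b) (Z.of_nat k))
     (seq 0 (Z.to_nat o))) (seq 0 (Z.to_nat m))) (seq 0 (Z.to_nat m))).
  intros g [a [b [k ->]]]. rewrite !Z.mul_1_l.
  assert (E : P a b k = P (a mod m) (b mod m) (k mod o)).
  { unfold P. rewrite <- (zpow_modm x m a), <- (zpow_modm y m b), <- (zpow_modm c o k); auto; lia. }
  rewrite E. apply in_flat_map. exists (Z.to_nat (a mod m)). split.
  { apply in_seq. assert (0 <= a mod m < m) by (apply Z.mod_pos_bound; lia). lia. }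
  apply in_flat_map. exists (Z.to_nat (b mod m)). split.
  { apply in_seq. assert (0 <= b mod m < m) by (apply Z.mod_pos_bound; lia). lia. }
  apply in_map_iff. exists (Z.to_nat (k mod o)). split.
  - assert (0 <= a mod m < m) by (apply Z.mod_pos_bound; lia).
    assert (0 <= b mod m < m) by (apply Z.mod_pos_bound; lia).
    assert (0 <= k mod o < o) by (apply Z.mod_pos_bound; lia).
    rewrite !Z2Nat.id by lia. reflexivity.
  - apply in_seq. assert (0 <= k mod o < o) by (apply Z.mod_pos_bound; lia). lia.
Qed.

End Two.

Fixpoint lists_over {A : Type} (l : list A) (n : nat) : list (list A) :=
  match n with
  | O => nil :: nil
  | Datatypes.S n' => flat_map (fun a => map (cons a) (lists_over l n')) l
  end.

Lemma lists_over_spec (A : Type) (l L : list A) :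
  (forall a, In a L -> In a l) -> In L (lists_over l (length L)).
Proof.
  induction L as [|a L IH]; intro H; simpl.
  - left. reflexivity.
  - apply in_flat_map. exists a. split. apply H. left. reflexivity.
    apply in_map. apply IH. intros b Hb. apply H. right. exact Hb.
Qed.

Lemma fin_fibers (B : Type) (Q : T -> Prop) (F : T -> B) (Ls : list B) (lH : list T) :
  (forall g, Q g -> In (F g) Ls) ->
  (forall g g', Q g -> Q g' -> F g = F g' -> In g' (map (fun h => h ⋅ g) lH)) -> fin Q.
Proof.
  revert Q. induction Ls as [|L Ls IH]; intros Q H1 H2.
  - exists nil. intros g Hg. destruct (H1 g Hg).
  - destruct (IH (fun g => Q g /\ F g <> L)) as [l' Hl'].
    + intros g [Hg Hn]. destruct (H1 g Hg) as [E|E]; [congruence|exact E].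
    + intros g g' [Hg _] [Hg' _]. apply H2; auto.
    + destruct (classic (exists g0, Q g0 /\ F g0 = L)) as [[g0 [Hg0 E0]]|Hno].
      * exists (map (fun h => h ⋅ g0) lH ++ l'). intros g Hg. apply in_or_app.
        destruct (classic (F g = L)) as [E|E].
        -- left. apply (H2 g0 g); auto. congruence.
        -- right. apply Hl'. auto.
      * exists l'. intros g Hg. apply Hl'. split; auto. intro E. apply Hno. exists g. auto.
Qed.

Lemma map_eq_in (A B : Type) (f g : A -> B) (l : list A) :
  map f l = map g l -> forall a, In a l -> f a = g a.
Proof.
  induction l as [|b l IH]; simpl; intros E a Ha; [destruct Ha|].
  injection E as E1 E2. destruct Ha as [<-|Ha]; auto.
Qed.

Lemma comm_eq g g' h : comm mul inv g h = comm mul inv g' h ->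
  g' ⋅ inv g ⋅ inv h = inv h ⋅ (g' ⋅ inv g).
Proof.
  unfold comm. intro E. rewrite !mulA in E. apply cancel_r in E.
  assert (E2 : g' ⋅ (inv g ⋅ inv h ⋅ g) ⋅ inv g = g' ⋅ (inv g' ⋅ inv h ⋅ g') ⋅ inv g) by (rewrite E; reflexivity).
  rewrite !mulA in E2. rewrite mulKV, mulVr, mul1l in E2. rewrite E2, !mulA. reflexivity.
Qed.

Lemma Z_fin (H : T -> Prop) (lH : list T) :
  (forall h, H h -> In h lH) -> is_subgroup mul one inv H ->
  (forall g, centralizer mul H g -> H g) ->
  forall i, fin (upper_central mul one inv i).
Proof.
  intros Hl [_ [_ Hinv]] Hcent i. induction i as [|i IH].
  - exists (one :: nil). intros g Hg. simpl in Hg. left. auto.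
  - destruct IH as [lZ HZ].
    apply (fin_fibers _ _ (fun g => map (fun h => comm mul inv g h) lH) (lists_over lZ (length lH)) lH).
    + intros g Hg. rewrite <- (length_map (fun h => comm mul inv g h) lH). apply lists_over_spec.
      intros a Ha. apply in_map_iff in Ha. destruct Ha as [h [<- _]]. apply HZ. apply Hg.
    + intros g g' _ _ E. apply in_map_iff. exists (g' ⋅ inv g). split; [apply mulVK|].
      apply Hl. apply Hcent. intros h Hh.
      assert (E2 := map_eq_in _ _ _ _ _ E (inv h) (Hl _ (Hinv _ Hh))). simpl in E2.
      apply comm_eq in E2. rewrite inv_inv in E2. exact E2.
Qed.

Lemma comm_one g h : comm mul inv g h = one <-> g ⋅ h = h ⋅ g.
Proof.
  unfold comm. split; intro E.
  - apply inv_uniq in E. rewrite E, inv_mul, !inv_inv. reflexivity.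
  - rewrite E, !mulA, mulVK, mulVl. reflexivity.
Qed.

Lemma step0 k : (forall v, upper_central mul one inv k v -> central v) \/
  (exists x y, central (comm mul inv x y) /\ comm mul inv x y <> one).
Proof.
  induction k as [|k [IH|IH]].
  - left. intros v Hv g. simpl in Hv. subst. rewrite mul1l, mul1r. reflexivity.
  - destruct (classic (forall v, upper_central mul one inv (Datatypes.S k) v -> central v)) as [Hy|Hn].
    + left. exact Hy.
    + right. apply not_all_ex_not in Hn. destruct Hn as [v Hv].
      apply imply_to_and in Hv. destruct Hv as [Hv Hnc].
      unfold central in Hnc. apply not_all_ex_not in Hnc. destruct Hnc as [w Hw].
      exists v, w. split.
      * apply IH. apply Hv.
      * intro E. apply comm_one in E. contradiction.
  - right. exact IH.
Qed.

End Grp.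

Theorem theorem3p1 (T : Type) (mul : T -> T -> T) (one : T) (inv : T -> T)
  (HG : is_group mul one inv)
  (Hnil : nilpotent_group mul one inv)
  (HA : forall H : T -> Prop, is_subgroup mul one inv H -> ~ abelian_set mul H ->
        forall g, centralizer mul H g -> H g) :
  abelian_group mul \/ finite_group T.
Proof.
  destruct Hnil as [n Hn].
  destruct (step0 T mul one inv HG n) as [Hl | [x [y [Hc Hc1]]]].
  - left. intros a b. apply (Hl a (Hn a) b).
  - right.
    destruct (H_fin T mul one inv HG x y Hc HA Hc1) as [lH HlH].
    assert (HS := S_sub T mul one inv HG x y Hc 1 1 1 1 eq_refl).
    assert (Hnab : ~ abelian_set mul (S T mul one inv x y 1 1 1)).
    { apply (S_nonab T mul one inv HG x y Hc 1 1 1). change (1 * 1) with 1. rewrite zpow1; auto. }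
    destruct (Z_fin T mul one inv HG _ lH HlH HS (HA _ HS Hnab) n) as [l Hl].
    exists l. intro g. apply Hl. apply Hn.
Qed.
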